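(* Let $I\subseteq\mathbb{R}$ be an open interval (possibly unbounded), $\Sigma=I\times\mathbb{R}$, $m>1$ an integer, and let $F\in C^\omega(\Sigma,\mathbb{R}^2)$ be a non-singular map of the form $F(x,y)=\big(p_m(x)y^m+p_1(x)y+p_0(x),\;q_m(x)y^m+q_1(x)y+q_0(x)\big)$ with $p_m,q_m\in C^\omega(I,\mathbb{R})$. Set $d_{1m}(x)=p_1(x)q_m(x)-q_1(x)p_m(x)$ and $d^*_{1m}(x)=p_1'(x)q_m(x)-q_1'(x)p_m(x)$. Suppose at least one of the following holds: (i) $d_{1m}(x)\neq0$ for all $x\in I$; (ii) for every $x\in I$, $d_{1m}(x)=0$ implies $d^*_{1m}(x)\neq0$; (iii) $m$ is even and for every $x\in I$, $d_{1m}(x)=0$ implies $q_m(x)\neq0$; (iii$'$) $m$ is even and for every $x\in I$, $d_{1m}(x)=0$ implies $p_m(x)\neq0$; (iv) $m$ is odd and for every $x\in I$, $d_{1m}(x)=0$ implies $q_m(x)\neq0$ and $q_1(x)\le0$; (iv$'$) $m$ is odd and for every $x\in I$, $d_{1m}(x)=0$ implies $p_m(x)\neq0$ and $p_1(x)\le0$. Then $F$ is injective.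
   Context: For $F=(P,Q)$, $d_F=P_xQ_y-P_yQ_x$ is the Jacobian determinant; $F$ is non-singular if $d_F(x,y)\neq0$ for all $(x,y)\in\Sigma$. $C^\omega$ denotes real analytic functions. *)

(* Defs.v *)
From Stdlib Require Export Reals.
From Coquelicot Require Export Coquelicot.
Open Scope R_scope.

Definition in_interval (a b : Rbar) (x : R) : Prop :=
  Rbar_lt a (Finite x) /\ Rbar_lt (Finite x) b.

Definition analytic_on1 (U : R -> Prop) (f : R -> R) : Prop :=
  forall x0, U x0 ->
    exists r, 0 < r /\ exists c : nat -> R,
      forall x, U x -> Rabs (x - x0) < r ->
        is_pseries c (x - x0) (f x).

Definition analytic_on2 (U : R -> R -> Prop) (f : R -> R -> R) : Prop :=
  forall x0 y0, U x0 y0 ->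
    exists r, 0 < r /\ exists c : nat -> nat -> R,
      forall x y, U x y -> Rabs (x - x0) < r -> Rabs (y - y0) < r ->
        (forall n, ex_series (fun k => Rabs (c n k * (x - x0) ^ n * (y - y0) ^ k))) /\
        ex_series (fun n => Series (fun k => Rabs (c n k * (x - x0) ^ n * (y - y0) ^ k))) /\
        is_series (fun n => Series (fun k => c n k * (x - x0) ^ n * (y - y0) ^ k)) (f x y).

Definition jac_det (P Q : R -> R -> R) (x y : R) : R :=
  Derive (fun t => P t y) x * Derive (fun t => Q x t) y
  - Derive (fun t => P x t) y * Derive (fun t => Q t y) x.

(* Main.v *)
Require Import Defs.
From Stdlib Require Import Reals Arith Lra Lia Classical.
From Coquelicot Require Import Coquelicot.
Open Scope R_scope.


Lemma bounded_of_lim0 (u : nat -> R) : is_lim_seq u 0 -> exists M, forall n, Rabs (u n) <= M.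
Proof.
  intros H. apply is_lim_seq_spec in H.
  destruct (H (mkposreal 1 Rlt_0_1)) as [N HN].
  assert (G : forall N K, (forall n, (N <= n)%nat -> Rabs (u n) <= K) -> exists M, forall n, Rabs (u n) <= M).
  { induction N0 as [|N' IH]; intros K HK.
    - exists K. intros n; apply HK; lia.
    - apply (IH (Rmax K (Rabs (u N')))). intros n Hn.
      destruct (Nat.eq_dec n N') as [->|Hne].
      + apply Rmax_r.
      + eapply Rle_trans; [apply HK; lia| apply Rmax_l]. }
  apply (G N 1). intros n Hn. specialize (HN n Hn). simpl in HN. rewrite Rminus_0_r in HN. lra.
Qed.

Lemma radius_pos (c : nat -> R) (z : R) : 0 < z -> ex_series (fun n => c n * z ^ n) ->
  Rbar_lt 0 (CV_radius c).
Proof.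
  intros Hz Hs. apply ex_series_lim_0 in Hs. apply bounded_of_lim0 in Hs.
  destruct (CV_radius_bounded c) as [Hub _].
  assert (Hle : Rbar_le z (CV_radius c)) by (apply Hub; exact Hs).
  apply Rbar_lt_le_trans with (Finite z); [simpl; exact Hz| exact Hle].
Qed.

Lemma loc_ps_derive (f : R -> R) x0 r (c : nat -> R) : 0 < r ->
  (forall x, Rabs (x - x0) < r -> is_pseries c (x - x0) (f x)) -> ex_derive f x0.
Proof.
  intros Hr Hf.
  assert (Hrad : Rbar_lt 0 (CV_radius c)).
  { apply radius_pos with (r/2). lra.
    assert (H1 := Hf (x0 + r/2)). replace (x0 + r/2 - x0) with (r/2) in H1 by ring.
    rewrite Rabs_pos_eq in H1 by lra. specialize (H1 ltac:(lra)).
    apply is_pseries_R in H1. eexists; exact H1. }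
  assert (Hd : ex_derive (fun x => PSeries c (x - x0)) x0).
  { eexists. apply (is_derive_comp (PSeries c) (fun x => x - x0)).
    - replace (x0 - x0) with 0 by ring. apply is_derive_PSeries. rewrite Rabs_R0. exact Hrad.
    - auto_derive; auto. }
  destruct Hd as [l Hl]. exists l.
  apply is_derive_ext_loc with (fun x => PSeries c (x - x0)); [|exact Hl].
  exists (mkposreal r Hr). intros y Hy. apply is_pseries_unique. apply Hf. exact Hy.
Qed.

Lemma interval_open a b x0 : in_interval a b x0 -> exists d, 0 < d /\ forall x, Rabs (x - x0) < d -> in_interval a b x.
Proof.
  unfold in_interval. intros [Ha Hb].
  destruct a as [a| |]; destruct b as [b| |]; simpl in *; try contradiction.
  - exists (Rmin (x0 - a) (b - x0)). split. apply Rmin_pos; lra.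
    intros x Hx. apply Rabs_def2 in Hx. destruct Hx as [H1 H2].
    assert (Rmin (x0 - a) (b - x0) <= x0 - a) by apply Rmin_l.
    assert (Rmin (x0 - a) (b - x0) <= b - x0) by apply Rmin_r. split; lra.
  - exists (x0 - a). split. lra. intros x Hx. apply Rabs_def2 in Hx. split; [lra|exact I].
  - exists (b - x0). split. lra. intros x Hx. apply Rabs_def2 in Hx. split; [exact I|lra].
  - exists 1. split. lra. intros; split; exact I.
Qed.

Lemma interval_between a b u w t : in_interval a b u -> in_interval a b w -> u <= t <= w -> in_interval a b t.
Proof.
  unfold in_interval. intros [H1 H2] [H3 H4] Ht.
  destruct a as [a| |]; destruct b as [b| |]; simpl in *; try contradiction; lra.
Qed.

Lemma an1_ex_derive a b f x0 : analytic_on1 (in_interval a b) f -> in_interval a b x0 -> ex_derive f x0.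
Proof.
  intros Han Hx0. destruct (interval_open a b x0 Hx0) as [d [Hd Hin]].
  destruct (Han x0 Hx0) as [r [Hr [c Hc]]].
  apply loc_ps_derive with (Rmin r d) c. apply Rmin_pos; lra.
  intros x Hx. apply Hc. apply Hin. eapply Rlt_le_trans; [exact Hx| apply Rmin_r].
  eapply Rlt_le_trans; [exact Hx| apply Rmin_l].
Qed.

Lemma series_single (s : nat -> R) : (forall k, s (S k) = 0) -> is_series s (s O).
Proof.
  intros H. apply is_series_Reals. intros eps He. exists O. intros n _.
  assert (E : sum_f_R0 s n = s O).
  { induction n; simpl. reflexivity. rewrite IHn, H. ring. }
  rewrite E. unfold R_dist. rewrite Rminus_diag_eq, Rabs_R0 by reflexivity. exact He.
Qed.

Lemma an2_ex_derive a b (P : R -> R -> R) y0 x0 :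
  analytic_on2 (fun x y => in_interval a b x) P -> in_interval a b x0 -> ex_derive (fun x => P x y0) x0.
Proof.
  intros Han Hx0. destruct (interval_open a b x0 Hx0) as [d [Hd Hin]].
  destruct (Han x0 y0 Hx0) as [r [Hr [c Hc]]].
  apply loc_ps_derive with (Rmin r d) (fun n => c n O). apply Rmin_pos; lra.
  intros x Hx.
  assert (Hx1 : Rabs (x - x0) < r) by (eapply Rlt_le_trans; [exact Hx| apply Rmin_l]).
  assert (Hx2 : in_interval a b x) by (apply Hin; eapply Rlt_le_trans; [exact Hx| apply Rmin_r]).
  assert (Hy : Rabs (y0 - y0) < r) by (rewrite Rminus_diag_eq, Rabs_R0 by reflexivity; exact Hr).
  destruct (Hc x y0 Hx2 Hx1 Hy) as [_ [_ H]].
  apply is_pseries_R. eapply is_series_ext; [|exact H].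
  intros n. simpl. apply is_series_unique.
  replace (c n O * (x - x0) ^ n) with (c n O * (x - x0) ^ n * (y0 - y0) ^ 0) by (simpl; ring).
  apply series_single. intros k. replace (y0 - y0) with 0 by ring. simpl. ring.
Qed.

Lemma pow_opp_odd (Y : R) n : Nat.Odd n -> (- Y) ^ n = - (Y ^ n).
Proof.
  intros [p ->]. rewrite !pow_add, !pow_mult.
  replace ((- Y) ^ 2) with (Y ^ 2) by ring. simpl. ring.
Qed.

Lemma pow_le_abs (y : R) t n : 1 <= Rabs y -> (t <= n)%nat -> Rabs (y ^ t) <= Rabs y ^ n.
Proof. intros H Ht. rewrite <- RPow_abs. apply Rle_pow; auto. Qed.

Lemma odd_root n c al be ga de i j k l : Nat.Odd n -> c <> 0 ->
  (i < n)%nat -> (j < n)%nat -> (k < n)%nat -> (l < n)%nat ->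
  exists y, c * y ^ n + al * y ^ i + be * y ^ j + ga * y ^ k + de * y ^ l = 0.
Proof.
  intros Hodd Hc Hi Hj Hk Hl.
  set (f := fun y => c * y ^ n + al * y ^ i + be * y ^ j + ga * y ^ k + de * y ^ l).
  set (K := Rabs al + Rabs be + Rabs ga + Rabs de).
  assert (HK : 0 <= K) by (unfold K; pose proof (Rabs_pos al); pose proof (Rabs_pos be);
     pose proof (Rabs_pos ga); pose proof (Rabs_pos de); lra).
  assert (Hca : 0 < Rabs c) by (apply Rabs_pos_lt; exact Hc).
  set (Y := 1 + K / Rabs c).
  assert (HKc : 0 <= K / Rabs c) by (apply Rmult_le_pos; [lra| left; apply Rinv_0_lt_compat; lra]).
  assert (HY : 1 <= Y) by (unfold Y; lra).
  destruct n as [|n']. { destruct Hodd as [p Hp]; lia. }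
  assert (bound : forall y, Rabs y = Y ->
    Rabs (al * y ^ i + be * y ^ j + ga * y ^ k + de * y ^ l) <= K * Y ^ n').
  { intros y Hy.
    assert (B : forall t, (t < S n')%nat -> Rabs (y ^ t) <= Y ^ n').
    { intros t Ht. rewrite <- Hy. apply pow_le_abs; [lra| lia]. }
    pose proof (B i Hi); pose proof (B j Hj); pose proof (B k Hk); pose proof (B l Hl).
    eapply Rle_trans. apply Rabs_triang. eapply Rle_trans. apply Rplus_le_compat_r. apply Rabs_triang.
    eapply Rle_trans. apply Rplus_le_compat_r. apply Rplus_le_compat_r. apply Rabs_triang.
    rewrite !Rabs_mult. unfold K.
    pose proof (Rabs_pos al); pose proof (Rabs_pos be); pose proof (Rabs_pos ga); pose proof (Rabs_pos de).
    assert (Rabs al * Rabs (y ^ i) <= Rabs al * Y ^ n') by (apply Rmult_le_compat_l; lra).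
    assert (Rabs be * Rabs (y ^ j) <= Rabs be * Y ^ n') by (apply Rmult_le_compat_l; lra).
    assert (Rabs ga * Rabs (y ^ k) <= Rabs ga * Y ^ n') by (apply Rmult_le_compat_l; lra).
    assert (Rabs de * Rabs (y ^ l) <= Rabs de * Y ^ n') by (apply Rmult_le_compat_l; lra).
    lra. }
  assert (HYn : 0 < Y ^ n') by (apply pow_lt; lra).
  assert (key : K * Y ^ n' < Rabs c * Y ^ S n').
  { simpl. replace (Rabs c * (Y * Y ^ n')) with ((Rabs c * Y) * Y ^ n') by ring.
    apply Rmult_lt_compat_r; [exact HYn|]. unfold Y. rewrite Rmult_plus_distr_l.
    replace (Rabs c * (K / Rabs c)) with K by (field; lra). lra. }
  assert (b1 := bound Y ltac:(rewrite Rabs_pos_eq; lra)).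
  assert (b2 := bound (- Y) ltac:(rewrite Rabs_Ropp, Rabs_pos_eq; lra)).
  assert (HfY : f Y = c * Y ^ S n' + (al * Y ^ i + be * Y ^ j + ga * Y ^ k + de * Y ^ l)) by (unfold f; ring).
  assert (HfmY : f (- Y) = - (c * Y ^ S n') + (al * (-Y) ^ i + be * (-Y) ^ j + ga * (-Y) ^ k + de * (-Y) ^ l))
    by (unfold f; rewrite pow_opp_odd by exact Hodd; ring).
  assert (Hcont : continuity f).
  { intros y. apply continuity_pt_filterlim. apply (ex_derive_continuous (K:=R_AbsRing) (V:=R_NormedModule)). unfold f. auto_derive. auto. }
  assert (Hsign : Rmin (f (-Y)) (f Y) <= 0 <= Rmax (f (-Y)) (f Y)).
  { rewrite HfY, HfmY.
    apply Rabs_le_between in b1. apply Rabs_le_between in b2.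
    destruct (Rlt_or_le 0 c) as [Hp|Hn].
    - rewrite Rabs_pos_eq in key by lra.
      split; [eapply Rle_trans; [apply Rmin_l|]| eapply Rle_trans; [|apply Rmax_r]]; lra.
    - rewrite Rabs_left1 in key by lra.
      split; [eapply Rle_trans; [apply Rmin_r|]| eapply Rle_trans; [|apply Rmax_l]]; lra. }
  destruct (IVT_gen f (-Y) Y 0 Hcont Hsign) as [y [_ Hy]].
  exists y. exact Hy.
Qed.

Ltac fixR := match goal with |- ?a = ?b => change (@eq R a b) end;
  repeat match goal with |- context [Derive (fun t => ?f t) ?x] => change (Derive (fun t => f t) x) with (Derive f x) end;
  try change (match ?n with 0%nat => 1 | S _ => INR ?n + 1 end) with (INR (S n)).

Definition Jx (n : nat) (pm p1 p0 qm q1 q0 : R -> R) (x y : R) : R :=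
  (Derive pm x * (y * y ^ n) + Derive p1 x * y + Derive p0 x) * (qm x * (INR (S n) * y ^ n) + q1 x)
  - (pm x * (INR (S n) * y ^ n) + p1 x) * (Derive qm x * (y * y ^ n) + Derive q1 x * y + Derive q0 x).

Lemma jac_eq (n : nat) (pm p1 p0 qm q1 q0 : R -> R) (x y : R) :
  ex_derive pm x -> ex_derive p1 x -> ex_derive p0 x ->
  ex_derive qm x -> ex_derive q1 x -> ex_derive q0 x ->
  jac_det (fun x y => pm x * y ^ S n + p1 x * y + p0 x) (fun x y => qm x * y ^ S n + q1 x * y + q0 x) x y
  = Jx n pm p1 p0 qm q1 q0 x y.
Proof.
  intros H1 H2 H3 H4 H5 H6. unfold jac_det, Jx; cbv beta.
  assert (E1 : Derive (fun t : R => pm t * y ^ S n + p1 t * y + p0 t) x = Derive pm x * (y * y ^ n) + Derive p1 x * y + Derive p0 x)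
    by (apply is_derive_unique; auto_derive; [repeat split; auto| fixR; ring]).
  assert (E2 : Derive (fun t : R => qm t * y ^ S n + q1 t * y + q0 t) x = Derive qm x * (y * y ^ n) + Derive q1 x * y + Derive q0 x)
    by (apply is_derive_unique; auto_derive; [repeat split; auto| fixR; ring]).
  assert (E3 : Derive (fun t : R => pm x * t ^ S n + p1 x * t + p0 x) y = pm x * (INR (S n) * y ^ n) + p1 x)
    by (apply is_derive_unique; auto_derive; [auto| fixR; ring]).
  assert (E4 : Derive (fun t : R => qm x * t ^ S n + q1 x * t + q0 x) y = qm x * (INR (S n) * y ^ n) + q1 x)
    by (apply is_derive_unique; auto_derive; [auto| fixR; ring]).
  rewrite E1, E2, E3, E4. reflexivity.
Qed.

Lemma mvt (f df : R -> R) u w : u < w -> (forall t, u <= t <= w -> is_derive f t (df t)) ->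
  exists c, u < c < w /\ f w - f u = df c * (w - u).
Proof.
  intros Huw H. destruct (MVT_cor2 f df u w Huw) as [c [Hc1 Hc2]].
  - intros c Hc. apply is_derive_Reals. apply H. exact Hc.
  - exists c. split; auto.
Qed.

Lemma const_I a b (f : R -> R) : (forall t, in_interval a b t -> is_derive f t 0) ->
  forall u w, in_interval a b u -> in_interval a b w -> f u = f w.
Proof.
  intros H u w Hu Hw.
  destruct (Rtotal_order u w) as [Hlt|[Heq|Hgt]].
  - destruct (mvt f (fun _ => 0) u w Hlt) as [c [_ Hc]].
    + intros t Ht. apply H. exact (interval_between a b u w t Hu Hw Ht).
    + cbv beta in Hc. rewrite Rmult_0_l in Hc. lra.
  - subst; reflexivity.
  - destruct (mvt f (fun _ => 0) w u Hgt) as [c [_ Hc]].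
    + intros t Ht. apply H. exact (interval_between a b w u t Hw Hu Ht).
    + cbv beta in Hc. rewrite Rmult_0_l in Hc. lra.
Qed.

Lemma inj_I a b (f df : R -> R) : (forall t, in_interval a b t -> is_derive f t (df t)) ->
  (forall t, in_interval a b t -> df t <> 0) ->
  forall u w, in_interval a b u -> in_interval a b w -> f u = f w -> u = w.
Proof.
  intros H Hn u w Hu Hw Hf.
  destruct (Rtotal_order u w) as [Hlt|[Heq|Hgt]]; auto; exfalso.
  - destruct (mvt f df u w Hlt) as [c [Hc1 Hc]].
    + intros t Ht. apply H. exact (interval_between a b u w t Hu Hw Ht).
    + assert (Ic : in_interval a b c) by (apply (interval_between a b u w c Hu Hw); lra).
      apply (Hn c Ic). rewrite Hf in Hc. assert (Hc0 : df c * (w - u) = 0) by lra. apply Rmult_integral in Hc0. destruct Hc0; [auto|lra].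
  - destruct (mvt f df w u Hgt) as [c [Hc1 Hc]].
    + intros t Ht. apply H. exact (interval_between a b w u t Hw Hu Ht).
    + assert (Ic : in_interval a b c) by (apply (interval_between a b w u c Hw Hu); lra).
      apply (Hn c Ic). rewrite Hf in Hc. assert (Hc0 : df c * (w - u) = 0) by lra. apply Rmult_integral in Hc0. destruct Hc0; [auto|lra].
Qed.

Lemma inj_R (f df : R -> R) : (forall t, is_derive f t (df t)) -> (forall t, df t <> 0) ->
  forall u w, f u = f w -> u = w.
Proof.
  intros H Hn u w Hf.
  apply (inj_I m_infty p_infty f df); auto; intros; split; exact I.
Qed.

Lemma sumsq_pos (u w : R) : ~ (u = 0 /\ w = 0) -> 0 < u ^ 2 + w ^ 2.
Proof.
  intros H. destruct (Req_dec u 0) as [h1|h1].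
  - assert (h2 : w <> 0) by (intro; apply H; auto).
    pose proof (Rsqr_pos_lt w h2). pose proof (pow2_ge_0 u). unfold Rsqr in *. simpl. lra.
  - pose proof (Rsqr_pos_lt u h1). pose proof (pow2_ge_0 w). unfold Rsqr in *. simpl in *. lra.
Qed.

Lemma pow_eq_zero_lem (x : R) n : x ^ n = 0 -> (0 < n)%nat -> x = 0.
Proof. intros H _. destruct (Req_dec x 0); auto. exfalso. exact (pow_nonzero x n H0 H). Qed.

Lemma main (a b : Rbar) (n : nat) (Hn : (1 <= n)%nat) (pm p1 p0 qm q1 q0 : R -> R)
  (Hd : forall x, in_interval a b x -> ex_derive pm x /\ ex_derive p1 x /\ ex_derive p0 x /\
          ex_derive qm x /\ ex_derive q1 x /\ ex_derive q0 x)
  (HJ : forall x y, in_interval a b x -> Jx n pm p1 p0 qm q1 q0 x y <> 0)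
  (Hcase : (forall x, in_interval a b x -> p1 x * qm x - q1 x * pm x <> 0)
    \/ (forall x, in_interval a b x -> p1 x * qm x - q1 x * pm x = 0 ->
          Derive p1 x * qm x - Derive q1 x * pm x <> 0)
    \/ (Nat.Even (S n) /\ forall x, in_interval a b x -> p1 x * qm x - q1 x * pm x = 0 -> qm x <> 0)
    \/ (Nat.Even (S n) /\ forall x, in_interval a b x -> p1 x * qm x - q1 x * pm x = 0 -> pm x <> 0)
    \/ (Nat.Odd (S n) /\ forall x, in_interval a b x -> p1 x * qm x - q1 x * pm x = 0 ->
          qm x <> 0 /\ q1 x <= 0)
    \/ (Nat.Odd (S n) /\ forall x, in_interval a b x -> p1 x * qm x - q1 x * pm x = 0 ->
          pm x <> 0 /\ p1 x <= 0))
  (x1 y1 x2 y2 : R) (Hx1 : in_interval a b x1) (Hx2 : in_interval a b x2)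
  (HP : pm x1 * (y1 * y1 ^ n) + p1 x1 * y1 + p0 x1 = pm x2 * (y2 * y2 ^ n) + p1 x2 * y2 + p0 x2)
  (HQ : qm x1 * (y1 * y1 ^ n) + q1 x1 * y1 + q0 x1 = qm x2 * (y2 * y2 ^ n) + q1 x2 * y2 + q0 x2) :
  x1 = x2 /\ y1 = y2.
Proof.
  set (N := INR (S n)).
  assert (HN : 0 < N) by (apply lt_0_INR; lia).
  assert (Vnz : forall x, in_interval a b x -> ~ (pm x = 0 /\ qm x = 0)).
  { intros x Hx [E1 E2].
    assert (Hd1 : p1 x * qm x - q1 x * pm x = 0) by (rewrite E1, E2; ring).
    destruct Hcase as [H|[H|[[_ H]|[[_ H]|[[_ H]|[_ H]]]]]].
    - exact (H x Hx Hd1).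
    - apply (H x Hx Hd1). rewrite E1, E2; ring.
    - exact (H x Hx Hd1 E2).
    - exact (H x Hx Hd1 E1).
    - exact (proj1 (H x Hx Hd1) E2).
    - exact (proj1 (H x Hx Hd1) E1). }
  assert (W0 : forall x, in_interval a b x -> Derive pm x * qm x - Derive qm x * pm x = 0).
  { intros x Hx.
    set (c := N * (Derive pm x * qm x - Derive qm x * pm x)).
    destruct (Req_dec c 0) as [Hc|Hc].
    { unfold c in Hc. apply Rmult_integral in Hc. destruct Hc; [lra|auto]. }
    exfalso.
    destruct (odd_root (S n + n) c
      (Derive pm x * q1 x + Derive p1 x * qm x * N - pm x * N * Derive q1 x - p1 x * Derive qm x)
      (Derive p0 x * qm x * N - pm x * N * Derive q0 x)
      (Derive p1 x * q1 x - p1 x * Derive q1 x)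
      (Derive p0 x * q1 x - p1 x * Derive q0 x) (S n) n 1 0) as [y Hy];
      try lia; auto.
    { exists n. lia. }
    apply (HJ x y Hx). rewrite <- Hy. unfold Jx, c. fold N.
    rewrite pow_add, pow_1, pow_O, <- tech_pow_Rmult. ring. }
  (* Step C: constant direction *)
  set (E1 := pm x1). set (E2 := qm x1).
  assert (NE : 0 < E1 ^ 2 + E2 ^ 2) by (apply sumsq_pos; exact (Vnz x1 Hx1)).
  assert (Dz : forall x, in_interval a b x -> E1 * qm x - E2 * pm x = 0).
  { set (phi := fun t => (E1 * qm t - E2 * pm t) ^ 2 / (pm t ^ 2 + qm t ^ 2)).
    assert (Hphi : forall t, in_interval a b t -> is_derive phi t 0).
    { intros t Ht. destruct (Hd t Ht) as (d1&d2&d3&d4&d5&d6).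
      pose proof (sumsq_pos _ _ (Vnz t Ht)) as Hpos.
      unfold phi. auto_derive. { repeat split; auto; lra. }
      fixR.
      transitivity (2 * (E1 * qm t - E2 * pm t) * (-(Derive pm t * qm t - Derive qm t * pm t))
                     * (E1 * pm t + E2 * qm t) / (pm t ^ 2 + qm t ^ 2) ^ 2).
      - field. lra.
      - rewrite (W0 t Ht). field. lra. }
    intros x Hx. pose proof (const_I a b phi Hphi x x1 Hx Hx1) as Hc.
    assert (H0 : phi x1 = 0).
    { unfold phi, E1, E2. replace (pm x1 * qm x1 - qm x1 * pm x1) with 0 by ring. unfold Rdiv. ring. }
    rewrite H0 in Hc. unfold phi in Hc.
    pose proof (sumsq_pos _ _ (Vnz x Hx)) as Hpos.
    assert (Hsq : (E1 * qm x - E2 * pm x) ^ 2 = 0).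
    { apply Rmult_integral in Hc. destruct Hc as [Hc|Hc]; auto.
      exfalso. apply (Rinv_neq_0_compat (pm x ^ 2 + qm x ^ 2)); [lra|exact Hc]. }
    apply (pow_eq_zero_lem _ 2 Hsq); lia. }
  assert (D1 : forall x, in_interval a b x -> E1 * Derive qm x - E2 * Derive pm x = 0).
  { intros x Hx. pose proof (sumsq_pos _ _ (Vnz x Hx)) as Hpos.
    assert (Id : (pm x ^ 2 + qm x ^ 2) * (E1 * Derive qm x - E2 * Derive pm x)
      = (pm x * Derive pm x + qm x * Derive qm x) * (E1 * qm x - E2 * pm x)
        - (Derive pm x * qm x - Derive qm x * pm x) * (E1 * pm x + E2 * qm x)) by ring.
    rewrite (Dz x Hx), (W0 x Hx) in Id. 
    assert (Id2 : (pm x ^ 2 + qm x ^ 2) * (E1 * Derive qm x - E2 * Derive pm x) = 0) by (rewrite Id; ring).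
    apply Rmult_integral in Id2. destruct Id2; [lra|auto]. }
  set (a1 := fun t => E1 * q1 t - E2 * p1 t).
  set (a0 := fun t => E1 * q0 t - E2 * p0 t).
  set (v := fun t => E1 * pm t + E2 * qm t).
  set (b1 := fun t => E1 * p1 t + E2 * q1 t).
  set (b0 := fun t => E1 * p0 t + E2 * q0 t).
  assert (Dr : forall x, in_interval a b x ->
     ex_derive a1 x /\ ex_derive a0 x /\ ex_derive v x /\ ex_derive b1 x /\ ex_derive b0 x /\
     Derive a1 x = E1 * Derive q1 x - E2 * Derive p1 x /\
     Derive a0 x = E1 * Derive q0 x - E2 * Derive p0 x /\
     Derive v x = E1 * Derive pm x + E2 * Derive qm x /\
     Derive b1 x = E1 * Derive p1 x + E2 * Derive q1 x /\
     Derive b0 x = E1 * Derive p0 x + E2 * Derive q0 x).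
  { intros x Hx. destruct (Hd x Hx) as (d1&d2&d3&d4&d5&d6).
    unfold a1, a0, v, b1, b0.
    repeat split;
      first [ (auto_derive; repeat split; auto; fail)
            | (apply is_derive_unique; auto_derive; [repeat split; auto| fixR; ring]) ]. }
  assert (RA : forall x y, in_interval a b x ->
    E1 * (qm x * (y * y ^ n) + q1 x * y + q0 x) - E2 * (pm x * (y * y ^ n) + p1 x * y + p0 x) = a1 x * y + a0 x).
  { intros x y Hx.
    replace (E1 * (qm x * (y * y ^ n) + q1 x * y + q0 x) - E2 * (pm x * (y * y ^ n) + p1 x * y + p0 x))
      with ((y * y ^ n) * (E1 * qm x - E2 * pm x) + (a1 x * y + a0 x)) by (unfold a1, a0; ring).
    rewrite (Dz x Hx). ring. }
  assert (RB : forall x y,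
    E1 * (pm x * (y * y ^ n) + p1 x * y + p0 x) + E2 * (qm x * (y * y ^ n) + q1 x * y + q0 x) = v x * (y * y ^ n) + b1 x * y + b0 x).
  { intros x y. unfold v, b1, b0. ring. }
  assert (Rd1 : forall x, in_interval a b x -> (E1 ^ 2 + E2 ^ 2) * (p1 x * qm x - q1 x * pm x) = - v x * a1 x).
  { intros x Hx.
    assert (Id : (E1 ^ 2 + E2 ^ 2) * (p1 x * qm x - q1 x * pm x) + v x * a1 x = (E1 * qm x - E2 * pm x) * (E1 * p1 x + E2 * q1 x))
      by (unfold v, a1; ring).
    rewrite (Dz x Hx) in Id. lra. }
  assert (Rd1s : forall x, in_interval a b x ->
     (E1 ^ 2 + E2 ^ 2) * (Derive p1 x * qm x - Derive q1 x * pm x) = - v x * Derive a1 x).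
  { intros x Hx. destruct (Dr x Hx) as (_&_&_&_&_&Da1&_). rewrite Da1.
    assert (Id : (E1 ^ 2 + E2 ^ 2) * (Derive p1 x * qm x - Derive q1 x * pm x) + v x * (E1 * Derive q1 x - E2 * Derive p1 x)
       = (E1 * qm x - E2 * pm x) * (E1 * Derive p1 x + E2 * Derive q1 x)) by (unfold v; ring).
    rewrite (Dz x Hx) in Id. lra. }
  assert (Rv1 : forall x, in_interval a b x -> E1 * v x = (E1 ^ 2 + E2 ^ 2) * pm x).
  { intros x Hx. assert (Id : E1 * v x - (E1 ^ 2 + E2 ^ 2) * pm x = E2 * (E1 * qm x - E2 * pm x)) by (unfold v; ring).
    rewrite (Dz x Hx) in Id. lra. }
  assert (Rv2 : forall x, in_interval a b x -> E2 * v x = (E1 ^ 2 + E2 ^ 2) * qm x).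
  { intros x Hx. assert (Id : E2 * v x - (E1 ^ 2 + E2 ^ 2) * qm x = - E1 * (E1 * qm x - E2 * pm x)) by (unfold v; ring).
    rewrite (Dz x Hx) in Id. lra. }
  set (JAB := fun x y => (Derive a1 x * y + Derive a0 x) * (N * v x * y ^ n + b1 x)
      - a1 x * (Derive v x * (y * y ^ n) + Derive b1 x * y + Derive b0 x)).
  assert (JABne : forall x y, in_interval a b x -> JAB x y <> 0).
  { intros x y Hx. destruct (Dr x Hx) as (_&_&_&_&_&Da1&Da0&Dv&Db1&Db0).
    set (Px := Derive pm x * (y * y ^ n) + Derive p1 x * y + Derive p0 x).
    set (Qx := Derive qm x * (y * y ^ n) + Derive q1 x * y + Derive q0 x).
    set (Py := pm x * (N * y ^ n) + p1 x).
    set (Qy := qm x * (N * y ^ n) + q1 x).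
    assert (HAx : E1 * Qx - E2 * Px = (E1 * Derive q1 x - E2 * Derive p1 x) * y + (E1 * Derive q0 x - E2 * Derive p0 x)).
    { replace (E1 * Qx - E2 * Px) with ((y * y ^ n) * (E1 * Derive qm x - E2 * Derive pm x)
         + ((E1 * Derive q1 x - E2 * Derive p1 x) * y + (E1 * Derive q0 x - E2 * Derive p0 x))) by (unfold Px, Qx; ring).
      rewrite (D1 x Hx). ring. }
    assert (HAy : E1 * Qy - E2 * Py = a1 x).
    { replace (E1 * Qy - E2 * Py) with (N * y ^ n * (E1 * qm x - E2 * pm x) + a1 x) by (unfold Py, Qy, a1; ring).
      rewrite (Dz x Hx). ring. }
    assert (HBy : E1 * Py + E2 * Qy = N * v x * y ^ n + b1 x) by (unfold Py, Qy, v, b1; ring).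
    assert (HBx : E1 * Px + E2 * Qx = (E1 * Derive pm x + E2 * Derive qm x) * (y * y ^ n)
        + (E1 * Derive p1 x + E2 * Derive q1 x) * y + (E1 * Derive p0 x + E2 * Derive q0 x)) by (unfold Px, Qx; ring).
    assert (Heq : JAB x y = - (E1 ^ 2 + E2 ^ 2) * Jx n pm p1 p0 qm q1 q0 x y).
    { unfold JAB. rewrite Da1, Da0, Dv, Db1, Db0, <- HAx, <- HAy, <- HBy, <- HBx.
      unfold Jx. fold N. fold Px Qx Py Qy. ring. }
    rewrite Heq. apply Rmult_integral_contrapositive. split; [lra| exact (HJ x y Hx)]. }
  clearbody a1 a0 v b1 b0.
  assert (L0 : forall x, in_interval a b x -> a1 x = 0 ->
      Derive a1 x = 0 /\ Derive a0 x <> 0 /\ forall y, N * v x * y ^ n + b1 x <> 0).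
  { intros x Hx Ha.
    assert (Hform : forall y, JAB x y = (Derive a1 x * y + Derive a0 x) * (N * v x * y ^ n + b1 x))
      by (intros; unfold JAB; rewrite Ha; ring).
    assert (Hda1 : Derive a1 x = 0).
    { destruct (Req_dec (Derive a1 x) 0) as [h|h]; auto. exfalso.
      apply (JABne x (- Derive a0 x / Derive a1 x) Hx). rewrite Hform.
      replace (Derive a1 x * (- Derive a0 x / Derive a1 x) + Derive a0 x) with 0 by (field; auto). ring. }
    assert (Hp : forall y, Derive a0 x * (N * v x * y ^ n + b1 x) <> 0).
    { intros y. pose proof (JABne x y Hx) as Hj. rewrite Hform, Hda1 in Hj.
      replace (0 * y + Derive a0 x) with (Derive a0 x) in Hj by ring. exact Hj. }
    split; [exact Hda1|split].
    - intro h. apply (Hp 0). rewrite h. ring.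
    - intros y h. apply (Hp y). rewrite h. ring. }
  assert (Dich_v : (forall x, in_interval a b x -> v x <> 0) -> Nat.Odd (S n) ->
     (forall x, in_interval a b x -> a1 x <> 0) \/ (forall x, in_interval a b x -> a1 x = 0)).
  { intros Hv Ho.
    assert (lead : forall x, in_interval a b x -> N * Derive a1 x * v x - a1 x * Derive v x = 0).
    { intros x Hx. destruct (Req_dec (N * Derive a1 x * v x - a1 x * Derive v x) 0) as [h|h]; auto. exfalso.
      destruct (odd_root (S n) (N * Derive a1 x * v x - a1 x * Derive v x) (N * Derive a0 x * v x)
         (Derive a1 x * b1 x - a1 x * Derive b1 x) (Derive a0 x * b1 x - a1 x * Derive b0 x) 0 n 1 0 0)
        as [y Hy]; try lia; auto.
      apply (JABne x y Hx). rewrite <- Hy. unfold JAB. rewrite pow_1, pow_O, <- tech_pow_Rmult. ring. }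
    set (psi := fun t => a1 t ^ S n / v t).
    assert (Hpsi : forall t, in_interval a b t -> is_derive psi t 0).
    { intros t Ht. destruct (Dr t Ht) as (e1&e2&e3&e4&e5&_).
      pose proof (Hv t Ht) as hv.
      unfold psi. auto_derive. { repeat split; auto. }
      fixR. fold N.
      transitivity (a1 t ^ n * (N * Derive a1 t * v t - a1 t * Derive v t) / (v t) ^ 2).
      - field. exact hv.
      - rewrite (lead t Ht). field. exact hv. }
    destruct (classic (exists x0, in_interval a b x0 /\ a1 x0 = 0)) as [[x0 [Hx0 Ha0]]|Hno].
    - right. intros x Hx. pose proof (const_I a b psi Hpsi x x0 Hx Hx0) as Hc.
      unfold psi in Hc. rewrite Ha0 in Hc. rewrite pow_i in Hc by lia.
      replace (0 / v x0) with 0 in Hc by (field; apply Hv; exact Hx0).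
      assert (Hp : a1 x ^ S n = 0).
      { apply Rmult_integral in Hc. destruct Hc as [Hc|Hc]; auto.
        exfalso. apply (Rinv_neq_0_compat (v x)); [apply Hv; exact Hx| exact Hc]. }
      apply (pow_eq_zero_lem _ (S n) Hp); lia.
    - left. intros x Hx Ha. apply Hno. exists x. auto. }
  assert (d1m0 : forall x, in_interval a b x -> a1 x = 0 -> p1 x * qm x - q1 x * pm x = 0).
  { intros x Hx Ha. pose proof (Rd1 x Hx) as R. rewrite Ha in R.
    assert (R2 : (E1 ^ 2 + E2 ^ 2) * (p1 x * qm x - q1 x * pm x) = 0) by (rewrite R; ring).
    apply Rmult_integral in R2. destruct R2; [lra|auto]. }
  assert (noroot : Nat.Even (S n) -> forall x, in_interval a b x -> a1 x = 0 -> v x <> 0 -> False).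
  { intros He x Hx Ha hv. destruct (L0 x Hx Ha) as (_&_&Hb).
    assert (Hon : Nat.Odd n) by (apply Nat.Even_succ; exact He).
    destruct (odd_root n (N * v x) 0 0 0 (b1 x) 0 0 0 0) as [y Hy]; try lia; auto.
    { apply Rmult_integral_contrapositive. split; lra. }
    apply (Hb y). rewrite pow_O in Hy. lra. }
  assert (Dich : (forall x, in_interval a b x -> a1 x <> 0) \/ (forall x, in_interval a b x -> a1 x = 0)).
  { destruct Hcase as [H|[H|[[He H]|[[He H]|[[Ho H]|[Ho H]]]]]].
    - left. intros x Hx Ha. exact (H x Hx (d1m0 x Hx Ha)).
    - left. intros x Hx Ha. apply (H x Hx (d1m0 x Hx Ha)).
      destruct (L0 x Hx Ha) as (Hda&_&_). pose proof (Rd1s x Hx) as R. rewrite Hda in R.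
      assert (R2 : (E1 ^ 2 + E2 ^ 2) * (Derive p1 x * qm x - Derive q1 x * pm x) = 0) by (rewrite R; ring).
      apply Rmult_integral in R2. destruct R2; [lra|auto].
    - left. intros x Hx Ha. apply (noroot He x Hx Ha). intro hv.
      apply (H x Hx (d1m0 x Hx Ha)). pose proof (Rv2 x Hx) as R. rewrite hv in R.
      assert (R2 : (E1 ^ 2 + E2 ^ 2) * qm x = 0) by (rewrite <- R; ring).
      apply Rmult_integral in R2. destruct R2; [lra|auto].
    - left. intros x Hx Ha. apply (noroot He x Hx Ha). intro hv.
      apply (H x Hx (d1m0 x Hx Ha)). pose proof (Rv1 x Hx) as R. rewrite hv in R.
      assert (R2 : (E1 ^ 2 + E2 ^ 2) * pm x = 0) by (rewrite <- R; ring).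
      apply Rmult_integral in R2. destruct R2; [lra|auto].
    - apply Dich_v; auto. intros x Hx hv.
      assert (Hd0 : p1 x * qm x - q1 x * pm x = 0).
      { pose proof (Rd1 x Hx) as R. rewrite hv in R.
        assert (R2 : (E1 ^ 2 + E2 ^ 2) * (p1 x * qm x - q1 x * pm x) = 0) by (rewrite R; ring).
        apply Rmult_integral in R2. destruct R2; [lra|auto]. }
      apply (proj1 (H x Hx Hd0)). pose proof (Rv2 x Hx) as R. rewrite hv in R.
      assert (R2 : (E1 ^ 2 + E2 ^ 2) * qm x = 0) by (rewrite <- R; ring).
      apply Rmult_integral in R2. destruct R2; [lra|auto].
    - apply Dich_v; auto. intros x Hx hv.
      assert (Hd0 : p1 x * qm x - q1 x * pm x = 0).
      { pose proof (Rd1 x Hx) as R. rewrite hv in R.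
        assert (R2 : (E1 ^ 2 + E2 ^ 2) * (p1 x * qm x - q1 x * pm x) = 0) by (rewrite R; ring).
        apply Rmult_integral in R2. destruct R2; [lra|auto]. }
      apply (proj1 (H x Hx Hd0)). pose proof (Rv1 x Hx) as R. rewrite hv in R.
      assert (R2 : (E1 ^ 2 + E2 ^ 2) * pm x = 0) by (rewrite <- R; ring).
      apply Rmult_integral in R2. destruct R2; [lra|auto]. }
  assert (HA : a1 x1 * y1 + a0 x1 = a1 x2 * y2 + a0 x2).
  { rewrite <- (RA x1 y1 Hx1), <- (RA x2 y2 Hx2), HP, HQ. reflexivity. }
  assert (HB : v x1 * (y1 * y1 ^ n) + b1 x1 * y1 + b0 x1 = v x2 * (y2 * y2 ^ n) + b1 x2 * y2 + b0 x2).
  { rewrite <- (RB x1 y1), <- (RB x2 y2), HP, HQ. reflexivity. }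
  destruct Dich as [Hne|Hz].
  - assert (key : forall u w yu yw, in_interval a b u -> in_interval a b w -> u < w ->
       a1 u * yu + a0 u = a1 w * yw + a0 w ->
       v u * (yu * yu ^ n) + b1 u * yu + b0 u = v w * (yw * yw ^ n) + b1 w * yw + b0 w -> False).
    { intros u w yu yw Hu Hw Huw HAe HBe.
      set (C := a1 u * yu + a0 u).
      set (h := fun t => v t * ((C - a0 t) / a1 t) ^ S n + b1 t * ((C - a0 t) / a1 t) + b0 t).
      destruct (mvt h (fun t => - JAB t ((C - a0 t) / a1 t) / a1 t) u w Huw) as [c [Hc Hmv]].
      { intros t Ht. assert (It : in_interval a b t) by exact (interval_between a b u w t Hu Hw Ht).
        destruct (Dr t It) as (e1&e2&e3&e4&e5&_). pose proof (Hne t It) as hn.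
        unfold h. auto_derive. { repeat split; auto. }
        fixR. fold N. unfold JAB.
        set (Yn := ((C - a0 t) / a1 t) ^ n). change (((C + - a0 t) * / a1 t) ^ n) with Yn.
        field. exact hn. }
      assert (Ic : in_interval a b c) by (apply (interval_between a b u w c Hu Hw); lra).
      assert (hu : h u = v u * (yu * yu ^ n) + b1 u * yu + b0 u).
      { unfold h. replace ((C - a0 u) / a1 u) with yu by (unfold C; field; apply Hne; exact Hu). reflexivity. }
      assert (hw : h w = v w * (yw * yw ^ n) + b1 w * yw + b0 w).
      { unfold h. replace ((C - a0 w) / a1 w) with yw by (unfold C; rewrite HAe; field; apply Hne; exact Hw). reflexivity. }
      rewrite hu, hw, HBe in Hmv. cbv beta in Hmv.
      assert (Z : - JAB c ((C - a0 c) / a1 c) / a1 c * (w - u) = 0) by lra.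
      apply Rmult_integral in Z. destruct Z as [Z|Z]; [|lra].
      apply (JABne c ((C - a0 c) / a1 c) Ic).
      assert (Z2 : JAB c ((C - a0 c) / a1 c) = - (- JAB c ((C - a0 c) / a1 c) / a1 c) * a1 c)
        by (field; apply Hne; exact Ic).
      rewrite Z2, Z. ring. }
    destruct (Rtotal_order x1 x2) as [Hlt|[Heq|Hgt]].
    + exfalso. exact (key x1 x2 y1 y2 Hx1 Hx2 Hlt HA HB).
    + subst x2. split; auto.
      apply (Rmult_eq_reg_l (a1 x1)); [lra| apply Hne; exact Hx1].
    + exfalso. exact (key x2 x1 y2 y1 Hx2 Hx1 Hgt (eq_sym HA) (eq_sym HB)).
  - rewrite (Hz x1 Hx1), (Hz x2 Hx2) in HA.
    assert (Hx : x1 = x2).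
    { apply (inj_I a b a0 (Derive a0)); auto.
      - intros t Ht. destruct (Dr t Ht) as (_&e2&_). apply Derive_correct. exact e2.
      - intros t Ht. exact (proj1 (proj2 (L0 t Ht (Hz t Ht)))).
      - lra. }
    subst x2. split; auto.
    destruct (L0 x1 Hx1 (Hz x1 Hx1)) as (_&_&Hb).
    apply (inj_R (fun y => v x1 * y ^ S n + b1 x1 * y + b0 x1) (fun y => N * v x1 * y ^ n + b1 x1)).
    + intros t. auto_derive. { auto. } fixR. fold N. ring.
    + exact Hb.
    + exact HB.
Qed.
Theorem theorem2 (a b : Rbar) (m : nat) (Hm : (1 < m)%nat)
  (pm p1 p0 qm q1 q0 : R -> R) :
  let Sigma := fun x y : R => in_interval a b x in
  let P := fun x y => pm x * y ^ m + p1 x * y + p0 x in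
  let Q := fun x y => qm x * y ^ m + q1 x * y + q0 x in
  let d1m := fun x => p1 x * qm x - q1 x * pm x in
  let d1m_star := fun x => Derive p1 x * qm x - Derive q1 x * pm x in
  (* F = (P,Q) is real analytic on Sigma = I x R *)
  analytic_on2 Sigma P -> analytic_on2 Sigma Q ->
  (* p_m, q_m are real analytic on I *)
  analytic_on1 (in_interval a b) pm -> analytic_on1 (in_interval a b) qm ->
  (* F is non-singular on Sigma *)
  (forall x y, Sigma x y -> jac_det P Q x y <> 0) ->
  ( (forall x, in_interval a b x -> d1m x <> 0)
    \/ (forall x, in_interval a b x -> d1m x = 0 -> d1m_star x <> 0)
    \/ (Nat.Even m /\ forall x, in_interval a b x -> d1m x = 0 -> qm x <> 0)
    \/ (Nat.Even m /\ forall x, in_interval a b x -> d1m x = 0 -> pm x <> 0)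
    \/ (Nat.Odd m /\ forall x, in_interval a b x -> d1m x = 0 ->
          qm x <> 0 /\ q1 x <= 0)
    \/ (Nat.Odd m /\ forall x, in_interval a b x -> d1m x = 0 ->
          pm x <> 0 /\ p1 x <= 0) ) ->
  (* F is injective on Sigma *)
  forall x1 y1 x2 y2, Sigma x1 y1 -> Sigma x2 y2 ->
    P x1 y1 = P x2 y2 -> Q x1 y1 = Q x2 y2 -> x1 = x2 /\ y1 = y2.
Proof.
  destruct m as [|[|n']]; [lia|lia|].
  cbv zeta. intros HaP HaQ Hapm Haqm Hns Hcase x1 y1 x2 y2 Hx1 Hx2 HP HQ.
  assert (Hd : forall x, in_interval a b x -> ex_derive pm x /\ ex_derive p1 x /\ ex_derive p0 x /\
          ex_derive qm x /\ ex_derive q1 x /\ ex_derive q0 x).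
  { intros x Hx.
    pose proof (an1_ex_derive a b pm x Hapm Hx) as dpm.
    pose proof (an1_ex_derive a b qm x Haqm Hx) as dqm.
    pose proof (an2_ex_derive a b _ 0 x HaP Hx) as dP0.
    pose proof (an2_ex_derive a b _ 1 x HaP Hx) as dP1.
    pose proof (an2_ex_derive a b _ 0 x HaQ Hx) as dQ0.
    pose proof (an2_ex_derive a b _ 1 x HaQ Hx) as dQ1.
    cbv beta in dP0, dP1, dQ0, dQ1.
    assert (dp0 : ex_derive p0 x).
    { apply (ex_derive_ext (fun t => pm t * 0 ^ S (S n') + p1 t * 0 + p0 t)); [|exact dP0].
      intros t. fixR. rewrite pow_i by lia. ring. }
    assert (dq0 : ex_derive q0 x).
    { apply (ex_derive_ext (fun t => qm t * 0 ^ S (S n') + q1 t * 0 + q0 t)); [|exact dQ0].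
      intros t. fixR. rewrite pow_i by lia. ring. }
    assert (dp1 : ex_derive p1 x).
    { pose (F := fun t : R => pm t * 1 ^ S (S n') + p1 t * 1 + p0 t).
      change (ex_derive F x) in dP1.
      assert (EF : forall t, F t - pm t - p0 t = p1 t) by (intros t; unfold F; rewrite pow1; ring).
      clearbody F.
      apply (ex_derive_ext (fun t => F t - pm t - p0 t)); [exact EF|].
      auto_derive. repeat split; auto. }
    assert (dq1 : ex_derive q1 x).
    { pose (F := fun t : R => qm t * 1 ^ S (S n') + q1 t * 1 + q0 t).
      change (ex_derive F x) in dQ1.
      assert (EF : forall t, F t - qm t - q0 t = q1 t) by (intros t; unfold F; rewrite pow1; ring).
      clearbody F.
      apply (ex_derive_ext (fun t => F t - qm t - q0 t)); [exact EF|].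
      auto_derive. repeat split; auto. }
    repeat split; assumption. }
  assert (HJ : forall x y, in_interval a b x -> Jx (S n') pm p1 p0 qm q1 q0 x y <> 0).
  { intros x y Hx. destruct (Hd x Hx) as (e1&e2&e3&e4&e5&e6).
    rewrite <- jac_eq by assumption. exact (Hns x y Hx). }
  exact (main a b (S n') ltac:(lia) pm p1 p0 qm q1 q0 Hd HJ Hcase x1 y1 x2 y2 Hx1 Hx2 HP HQ).
Qed.
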